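(* For every integer $n\ge 2$, none of the Fibonacci numbers $F_1,F_2,\ldots,F_n$ is an eigenvalue of the Fibonacci--Redheffer matrix $F_R(n)$; that is, $F_j\notin\sigma(F_R(n))$ for $j=1,2,\ldots,n$.
   Context: The Fibonacci numbers are $F_1=F_2=1$, $F_n=F_{n-1}+F_{n-2}$ for $n\ge 3$. The Fibonacci--Redheffer matrix $F_R(n)=[F_R(i,j)]_{i,j=1}^n$ is defined by $F_R(i,j)=1$ if $j=1$; $F_R(i,j)=F_i$ if $i\mid j$; and $F_R(i,j)=0$ otherwise. $\sigma(A)$ denotes the set of eigenvalues of a square matrix $A$. *)

(* Defs.v *)
From mathcomp Require Import all_boot all_order all_algebra all_field.
Set Implicit Arguments. Unset Strict Implicit. Unset Printing Implicit Defensive.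
Import GRing.Theory Num.Theory.
Local Open Scope ring_scope.

Fixpoint fib (n : nat) : nat :=
  match n with
  | 0 => 0
  | 1 => 1
  | (m.+1 as p).+1 => fib p + fib m
  end.

(* Fibonacci--Redheffer matrix F_R(n) over algC (complex algebraic numbers).
   Row/column index k : 'I_n stands for the 1-based index k+1. *)
Definition fibRedheffer (n : nat) : 'M[algC]_n :=
  \matrix_(i < n, j < n)
    if j.+1 == 1%N then 1
    else if (i.+1 %| j.+1)%N then (fib i.+1)%:R else 0.

(* Main.v *)
Require Import Defs.
From mathcomp Require Import all_boot all_order all_algebra all_field.
From mathcomp Require Import zify ring lra.
Set Implicit Arguments. Unset Strict Implicit. Unset Printing Implicit Defensive.
Import Order.TTheory GRing.Theory Num.Theory.

Lemma fibSS k : fib k.+2 = fib k.+1 + fib k. Proof. by []. Qed.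

Lemma fib_pos k : (0 < k)%N -> (0 < fib k)%N.
Proof.
elim: k {-2}k (leqnn k) => [|N IH] k hk hk0; first by lia.
case: k hk hk0 => [|[|k]] // hk _; rewrite fibSS.
have := IH k.+1 ltac:(lia) isT. lia.
Qed.

Lemma fib_le_succ k : (fib k <= fib k.+1)%N.
Proof. case: k => [|k] //; rewrite fibSS; lia. Qed.

Lemma fib_mono a b : (a <= b)%N -> (fib a <= fib b)%N.
Proof.
move=> hab; rewrite -(subnKC hab); elim: (b - a)%N => [|d IH]; first by rewrite addn0.
rewrite addnS; apply: leq_trans IH (fib_le_succ _).
Qed.

Lemma fib_lt_succ k : (2 <= k)%N -> (fib k < fib k.+1)%N.
Proof. case: k => [|[|k]] // _; rewrite [fib k.+3]fibSS; have := fib_pos (k := k.+1) isT; lia. Qed.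

Lemma fib_strict a b : (2 <= a)%N -> (a < b)%N -> (fib a < fib b)%N.
Proof.
move=> ha hab; apply: leq_trans (fib_lt_succ ha) (fib_mono hab).
Qed.

Lemma fib_add2 a : (2 * fib a <= fib a.+2)%N.
Proof. rewrite fibSS; have := fib_le_succ a; lia. Qed.

Lemma fib_double i : (2 <= i)%N -> (3 * fib i <= fib (2 * i))%N.
Proof.
move=> hi; case: (ltnP i 3) => h3.
  by have -> : i = 2 by lia.
have h : (fib i.+3 <= fib (2 * i))%N by apply: fib_mono; lia.
apply: leq_trans h; rewrite !fibSS; have := fib_le_succ i; lia.
Qed.

Lemma fib_step i t : (2 <= i)%N -> (2 * fib (t * i) <= fib (t.+1 * i))%N.
Proof.
move=> hi; apply: leq_trans (fib_add2 _) _; apply: fib_mono; rewrite mulSn; lia.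
Qed.

Lemma fib_mul i q : (2 <= i)%N -> (1 <= q)%N -> ((2 ^ q + 1) * fib i <= fib (q.+1 * i))%N.
Proof.
move=> hi; elim: q => [|q IH] // _.
case: q IH => [|q] IH; first by rewrite expn1; apply: fib_double.
have h1 := IH isT; have h2 := fib_step q.+2 hi; rewrite [2 ^ q.+2]expnS; move: h1 h2; set X := 2 ^ q.+1; set f := fib i; nia.
Qed.

Local Open Scope ring_scope.

Lemma bound_rat m i N : (2 <= m)%N -> (m <= i)%N ->
  (fib i)%:R * \sum_(i.+1 <= k < N.+1 | (i %| k)%N) ((fib k - fib m)%:R)^-1
   <= 1 - ((2 ^ (N %/ i).-1)%:R)^-1 :> rat.
Proof.
move=> hm hmi; have hi0 : (0 < i)%N by lia.
elim: N => [|N IH].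
  by rewrite big_geq ?div0n ?expn0 ?invr1 ?subrr ?mulr0 //; lia.
case: (ltnP i N.+1) => hiN; last first.
  rewrite big_geq; last by lia.
  rewrite mulr0 subr_ge0 invf_le1 ?ler1n ?ltr0n ?expn_gt0 //.
rewrite big_mkcond big_nat_recr // -big_mkcond divnS //.
set fN := fib N.+1.
rewrite [X in _ * X <= _]/=.
case: ifP => hdv; last by rewrite addr0 add0n.
set q := (N %/ i)%N in IH *.
have hK : N.+1 = (q.+1 * i)%N.
  by move/divnK: (hdv) => {1}<-; rewrite divnS // hdv.
have hq : (1 <= q)%N by move: hK hiN; case: (q) => //= h; lia.
have hi2 : (2 <= i)%N by lia.
have hf := fib_mul hi2 hq.
rewrite /fN.
have hfm := fib_mono hmi.
have -> : (true + q)%N = q.+1 by [].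
rewrite [(q.+1).-1]/=.
have hF : (fib i)%:R * ((fib N.+1 - fib m)%:R)^-1 <= ((2 ^ q)%:R)^-1 :> rat.
  have hd : 0 < (fib N.+1 - fib m)%:R :> rat.
    rewrite ltr0n subn_gt0; rewrite hK; have := fib_pos (k := i) ltac:(lia).
    have : (1 <= 2 ^ q)%N by rewrite expn_gt0.
    nia.
  rewrite -[_ * _^-1]/(_ / _) ler_pdivrMr // ler_pdivlMl ?ltr0n ?expn_gt0 //.
  rewrite -natrM ler_nat hK. nia.
have h2 : (2 ^ q = 2 * 2 ^ q.-1)%N by rewrite -expnS prednK.
move: hF IH; rewrite h2 natrM invfM mulrDr.
set u := _^-1; set v := _^-1; set w := _^-1.
rewrite /v.
lra.
Qed.

Lemma desc_ind (P : nat -> Prop) (lo hi : nat) :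
  (forall i, (lo <= i <= hi)%N -> (forall k, (i < k <= hi)%N -> P k) -> P i) ->
  forall i, (lo <= i <= hi)%N -> P i.
Proof.
move=> H; suff: forall d i, (lo <= i <= hi)%N -> (hi - i <= d)%N -> P i.
  by move=> h i hi'; apply: (h (hi - i)%N).
elim=> [|d IH] i hi' hd; apply: H => // k hk.
  by lia.
by apply: IH; lia.
Qed.

Lemma bound_C m i N : (2 <= m)%N -> (m <= i)%N ->
  (fib i)%:R * \sum_(i.+1 <= k < N.+1 | (i %| k)%N) ((fib k - fib m)%:R)^-1 < 1 :> algC.
Proof.
move=> hm hmi.
have h := bound_rat N hm hmi.
have h1 : 1 - ((2 ^ (N %/ i).-1)%:R)^-1 < 1 :> rat.
  by rewrite gtrBl invr_gt0 ltr0n expn_gt0.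
have := le_lt_trans h h1; rewrite -(ltr_rat algC).
by rewrite rmorphM rmorph_sum /= rmorph_nat rmorph1; under eq_bigr do rewrite fmorphV rmorph_nat.
Qed.

Lemma alg1 (a b x1 xi R : algC) : x1 != 0 -> x1 + a * (xi + R) = b * xi ->
  -((a - b) * xi) / x1 = 1 + a * (R / x1).
Proof.
move=> h E.
have E' : (a - b) * xi = -(x1 + a * R) by rewrite mulrBl -E; ring.
rewrite E' opprK; field; done.
Qed.

Lemma alg2 (a x1 xm R : algC) : x1 != 0 -> x1 + a * (xm + R) = a * xm ->
  1 + a * (R / x1) = 0.
Proof.
move=> h E.
have E' : x1 + a * R = 0 by rewrite -[RHS](subrr (a * xm)) -[X in X - _]E; ring.
have -> : 1 + a * (R / x1) = (x1 + a * R) / x1 by field.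
by rewrite E' mul0r.
Qed.

Lemma alg3 (a b x1 xi xm R : algC) : x1 = 0 -> x1 + a * (xi + R) = b * xi ->
  b - a != 0 -> xi / xm = a * (R / xm) / (b - a).
Proof.
move=> h1 E h.
have E' : (b - a) * xi = a * R by rewrite mulrBl -E h1; ring.
have -> : xi = a * R / (b - a) by rewrite -E'; field.
by rewrite mulrA mulrAC.
Qed.

Lemma fibC_neq a b : (2 <= a)%N -> (a < b)%N -> (fib a)%:R != (fib b)%:R :> algC.
Proof. by move=> ha hab; rewrite eqr_nat neq_ltn (fib_strict ha hab). Qed.

Lemma core (n m : nat) (x : nat -> algC) :
  (2 <= m)%N -> (m <= n)%N ->
  x 1%N + \sum_(2 <= k < n.+1) x k = (fib m)%:R * x 1%N ->
  (forall i, (2 <= i <= n)%N ->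
     x 1%N + (fib i)%:R * (x i + \sum_(i.+1 <= k < n.+1 | (i %| k)%N) x k)
       = (fib m)%:R * x i) ->
  forall k, (1 <= k <= n)%N -> x k = 0.
Proof.
move=> hm hmn row1 rowi.
set R := fun i => \sum_(i.+1 <= k < n.+1 | (i %| k)%N) x k.
have rowi' : forall i, (2 <= i <= n)%N -> x 1%N + (fib i)%:R * (x i + R i) = (fib m)%:R * x i by [].
have [x10|x1nz] := eqVneq (x 1%N) 0; last first.
  exfalso.
  pose d k := ((fib k - fib m)%:R : algC).
  pose t k := - (d k * x k) / x 1%N.
  have dpos : forall k, (m < k)%N -> 0 < d k.
    by move=> k hk; rewrite ltr0n subn_gt0 fib_strict.
  have H : forall i, (m <= i <= n)%N -> (forall k, (i < k <= n)%N -> 0 < t k <= 1) ->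
      0 < 1 + (fib i)%:R * (R i / x 1%N) <= 1.
    move=> i hi IH.
    set U := \sum_(i.+1 <= k < n.+1 | (i %| k)%N) (t k / d k).
    set V := \sum_(i.+1 <= k < n.+1 | (i %| k)%N) (d k)^-1.
    have eRU : R i / x 1%N = - U.
      rewrite /R mulr_suml -sumrN big_nat_cond [RHS]big_nat_cond.
      apply: eq_bigr => k /andP[/andP[h1 h2] _].
      have hdk : d k != 0 by rewrite gt_eqF // dpos //; lia.
      by rewrite /t; field; apply/andP; split.
    have tk : forall k, (i < k <= n)%N -> 0 <= t k / d k <= (d k)^-1.
      move=> k hk; have /andP[t0 t1] := IH k hk.
      have hd : 0 < d k by apply: dpos; lia.
      apply/andP; split; first by rewrite divr_ge0 // ltW.
      by rewrite -[X in _ <= X]mul1r ler_wpM2r // invr_ge0 ltW.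
    have U0 : 0 <= U.
      rewrite /U big_nat_cond; apply: sumr_ge0 => k /andP[/andP[h1 h2] _].
      by have /andP[] := tk k ltac:(lia).
    have UV : U <= V.
      rewrite /U /V big_nat_cond [X in _ <= X]big_nat_cond.
      apply: ler_sum => k /andP[/andP[h1 h2] _].
      by have /andP[] := tk k ltac:(lia).
    have hV : (fib i)%:R * V < 1 by apply: bound_C => //; lia.
    have hU : (fib i)%:R * U < 1.
      apply: le_lt_trans hV; apply: ler_wpM2l => //; exact: ler0n.
    have hU0 : 0 <= (fib i)%:R * U by rewrite mulr_ge0 ?ler0n.
    rewrite eRU mulrN; apply/andP; split; first by rewrite subr_gt0.
    by rewrite gerBl.
  have tb : forall i, (m.+1 <= i <= n)%N -> 0 < t i <= 1.
    apply: desc_ind => i hi IH.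
    have := H i ltac:(lia) IH.
    rewrite /t /d natrB; last by apply: fib_mono; lia.
    by rewrite (alg1 x1nz (rowi' i ltac:(lia))).
  have := H m ltac:(lia) tb.
  by rewrite (alg2 x1nz (rowi' m ltac:(lia))) ltxx.
have Z : forall i, (m.+1 <= i <= n)%N -> x i = 0.
  apply: desc_ind => i hi IH.
  have R0 : R i = 0.
    rewrite /R big_nat_cond big1 // => k /andP[/andP[h1 h2] _]; apply: IH; lia.
  have := rowi' i ltac:(lia); rewrite R0 x10 addr0 add0r => /eqP.
  rewrite -subr_eq0 -mulrBl mulf_eq0 subr_eq0 => /orP[|/eqP //].
  by rewrite eq_sym (negPf (fibC_neq hm (ltac:(lia) : (m < i)%N))).
have [xm0|xmnz] := eqVneq (x m) 0.
  have Z2 : forall i, (2 <= i <= n)%N -> x i = 0.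
    apply: desc_ind => i hi IH.
    case: (ltngtP i m) => him; last by rewrite him xm0.
      have R0 : R i = 0.
        rewrite /R big_nat_cond big1 // => k /andP[/andP[h1 h2] _]; apply: IH; lia.
      have := rowi' i ltac:(lia); rewrite R0 x10 addr0 add0r => /eqP.
      rewrite -subr_eq0 -mulrBl mulf_eq0 subr_eq0 => /orP[|/eqP //].
      by rewrite (negPf (fibC_neq _ him)) //; lia.
    by apply: Z; lia.
  move=> k hk; case: (ltnP k 2) => hk2; first by have -> : k = 1%N by lia.
  by apply: Z2; lia.
exfalso.
have S0 : forall i, (2 <= i <= n)%N -> 0 <= x i / x m.
  apply: desc_ind => i hi IH.
  case: (ltngtP i m) => him; last by rewrite him divff.
    have hba : (fib m)%:R - (fib i)%:R != 0 :> algC.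
      by rewrite subr_eq0 eq_sym fibC_neq //; lia.
    rewrite (alg3 (x m) x10 (rowi' i ltac:(lia)) hba).
    have hR : 0 <= R i / x m.
      rewrite /R mulr_suml big_nat_cond; apply: sumr_ge0 => k /andP[/andP[h1 h2] _].
      apply: IH; lia.
    have hb : 0 <= (fib m)%:R - (fib i)%:R :> algC.
      rewrite subr_ge0 ler_nat; apply: fib_mono; lia.
    apply: divr_ge0 => //; apply: mulr_ge0 => //; exact: ler0n.
  by rewrite Z ?mul0r //; lia.
move: row1; rewrite x10 mulr0 add0r => /(congr1 (fun y => y / x m)).
rewrite mul0r mulr_suml.
rewrite (big_cat_nat _ (n := m)) //=; last by lia.
rewrite [X in _ + X]big_ltn; last by lia.
rewrite divff //.
have A0 : 0 <= \sum_(2 <= i < m) x i / x m.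
  rewrite big_nat_cond; apply: sumr_ge0 => k /andP[/andP[h1 h2] _]; apply: S0; lia.
have C0 : 0 <= \sum_(m.+1 <= i < n.+1) x i / x m.
  rewrite big_nat_cond; apply: sumr_ge0 => k /andP[/andP[h1 h2] _]; apply: S0; lia.
move=> E.
have : 1 <= \sum_(2 <= i < m) x i / x m + (1 + \sum_(m.+1 <= i < n.+1) x i / x m).
  by apply: ler_wpDl => //; rewrite lerDl.
by rewrite E ler10.
Qed.

Unset Implicit Arguments.

Theorem theorem4 (n : nat) (hn : (2 <= n)%N) (j : nat) (hj1 : (1 <= j)%N) (hjn : (j <= n)%N) :
  ~ eigenvalue (fibRedheffer n) (fib j)%:R.
Proof.
case: n hn hjn => [//|n] hn hjn.
move=> /eigenvalueP [v Hv vnz].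
set A := fibRedheffer n.+1 in Hv *.
set lam : algC := (fib j)%:R in Hv *.
have : \det (lam%:M - A) == 0.
  by apply/det0P; exists v => //; rewrite mulmxBr Hv mul_mx_scalar subrr.
rewrite -det_tr => /det0P [w wnz Hw].
have Hw' : w *m A^T = lam *: w.
  by move/eqP: Hw; rewrite linearB /= tr_scalar_mx mulmxBr mul_mx_scalar subr_eq0 => /eqP <-.
have Hrow : forall i : 'I_n.+1, \sum_k w 0 k * A i k = lam * w 0 i.
  move=> i; have := congr1 (fun M : 'rV_n.+1 => M 0 i) Hw'; rewrite /= !mxE => <-.
  by apply: eq_bigr => k _; rewrite [in RHS]mxE.
pose x k := w 0 (inord k.-1).
pose c i k : algC := if k == 1%N then 1 else if (i %| k)%N then (fib i)%:R else 0.
have Hnat : forall i, (1 <= i <= n.+1)%N -> \sum_(1 <= k < n.+2) x k * c i k = lam * x i.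
  move=> i hi; rewrite -[RHS]Hrow big_add1 /= big_mkord; apply: eq_bigr => k _.
  rewrite /A /x /c mxE inord_val inordK; last by lia.
  have hi' : (0 < i)%N by lia.
  by rewrite prednK.
pose m := if j == 1%N then 2%N else j.
have hm2 : (2 <= m)%N by rewrite /m; case: eqP => h //; lia.
have hmn : (m <= n.+1)%N by rewrite /m; case: eqP => h //; lia.
have hlam : lam = (fib m)%:R by rewrite /lam /m; case: eqP => [->|] //.
have hsplit : forall i, (2 <= i <= n.+1)%N ->
    \sum_(2 <= k < n.+2) x k * c i k = (fib i)%:R * (x i + \sum_(i.+1 <= k < n.+2 | (i %| k)%N) x k).
  move=> i hi.
  have -> : \sum_(2 <= k < n.+2) x k * c i k = \sum_(2 <= k < n.+2 | (i %| k)%N) (fib i)%:R * x k.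
    rewrite [RHS]big_mkcond; apply: eq_big_nat => k /andP[h1 h2]; rewrite /c.
    have -> : (k == 1%N) = false by apply/eqP; lia.
    by case: ifP => _; rewrite ?mulr0 // mulrC.
  rewrite -mulr_sumr; congr (_ * _).
  rewrite (big_cat_nat _ (n := i)); [|lia|lia].
  rewrite big_nat_cond big1 ?add0r; last first.
    move=> k /andP[/andP[h1 h2] h3]; exfalso; move: h3.
    by move/dvdn_leq => /(_ ltac:(lia)); lia.
  rewrite big_ltn_cond ?dvdnn /=; [by rewrite add0r | lia].
have row1 : x 1%N + \sum_(2 <= k < n.+2) x k = (fib m)%:R * x 1%N.
  have := Hnat 1%N ltac:(lia); rewrite big_ltn // -hlam => <-.
  rewrite /c eqxx mulr1; congr (_ + _).
  apply: eq_big_nat => k /andP[h1 h2].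
  have -> : (k == 1%N) = false by apply/eqP; lia.
  by rewrite dvd1n mulr1.
have rowi : forall i, (2 <= i <= n.+1)%N ->
     x 1%N + (fib i)%:R * (x i + \sum_(i.+1 <= k < n.+2 | (i %| k)%N) x k)
       = (fib m)%:R * x i.
  move=> i hi; rewrite -hsplit // -hlam -Hnat; last by lia.
  by rewrite [RHS]big_ltn //; congr (_ + _); rewrite /c eqxx mulr1.
have Z := core hm2 hmn row1 rowi.
move/negP: wnz; apply; apply/eqP/rowP => k; rewrite mxE.
have hk := ltn_ord k; have := Z k.+1 ltac:(lia); rewrite /x /= .
by rewrite inord_val.
Qed.
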